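(* Assume $a/b>\sqrt2$. For every self-intersected 4-periodic $P_1P_2P_3P_4$ (any parameter $u$ with $|u|\le u_{\max}$), the signed area of the polygon $P_1P_2P_3P_4$ is $0$, and the signed area of its outer polygon (whenever the outer polygon is defined) is also $0$.
   Context: The elliptic billiard is $\mathcal{E}: x^2/a^2+y^2/b^2=1$, $a>b>0$, $c=\sqrt{a^2-b^2}$. For $a/b>\sqrt2$ the self-intersected 4-periodics (closed 4-bounce billiard trajectories tangent to the confocal hyperbola $x^2/a''^2-y^2/b''^2=1$, $a''=a\sqrt{a^2-2b^2}/c$, $b''=b^2/c$) are parametrized by $u$ with $|u|\le u_{\max}:=\frac{a}{c^2}\sqrt{a^2-2b^2}$: $P_1=(au,\,b\sqrt{1-u^2})$, $P_3=(-au,\,b\sqrt{1-u^2})$, $P_2=\left(-\frac{a\sqrt{a^2(a^2-2b^2)-c^4u^2}}{c^2\sqrt{1-u^2}},\,-\frac{b^3}{c^2\sqrt{1-u^2}}\right)$, $P_4=\left(\frac{a\sqrt{a^2(a^2-2b^2)-c^4u^2}}{c^2\sqrt{1-u^2}},\,-\frac{b^3}{c^2\sqrt{1-u^2}}\right)$. The outer polygon has vertices $P_i'$, $i=1,\dots,4$, where $P_i'$ is the intersection of the tangent lines to $\mathcal{E}$ at $P_i$ and $P_{i+1}$ (indices mod 4). The signed area of a closed polygon $Q_1\dots Q_N$ with $Q_i=(x_i,y_i)$ is $\frac12\sum_{i=1}^N (x_iy_{i+1}-x_{i+1}y_i)$ (indices mod $N$). *)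

(* Defs.v *)
From Stdlib Require Import Reals List.
Import ListNotations.
Open Scope R_scope.

Definition pt := (R * R)%type.

Definition cc (a b : R) : R := sqrt (a^2 - b^2).

Definition umax (a b : R) : R := a / (cc a b)^2 * sqrt (a^2 - 2*b^2).

Definition P1 (a b u : R) : pt := (a*u, b * sqrt (1 - u^2)).
Definition P3 (a b u : R) : pt := (-(a*u), b * sqrt (1 - u^2)).
Definition P2 (a b u : R) : pt :=
  (- (a * sqrt (a^2*(a^2 - 2*b^2) - (cc a b)^4 * u^2)) / ((cc a b)^2 * sqrt (1 - u^2)),
   - b^3 / ((cc a b)^2 * sqrt (1 - u^2))).
Definition P4 (a b u : R) : pt :=
  ((a * sqrt (a^2*(a^2 - 2*b^2) - (cc a b)^4 * u^2)) / ((cc a b)^2 * sqrt (1 - u^2)),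
   - b^3 / ((cc a b)^2 * sqrt (1 - u^2))).

(* Tangent line to x^2/a^2 + y^2/b^2 = 1 at p = (x0,y0):
   (x0/a^2) x + (y0/b^2) y = 1.  Two tangent lines meet in a single point iff
   the determinant below is nonzero. *)
Definition tan_det (a b : R) (p q : pt) : R :=
  (fst p / a^2) * (snd q / b^2) - (fst q / a^2) * (snd p / b^2).

(* intersection point of the tangent lines at p and q (Cramer's rule);
   meaningful when tan_det a b p q <> 0 *)
Definition tan_meet (a b : R) (p q : pt) : pt :=
  ((snd q / b^2 - snd p / b^2) / tan_det a b p q,
   (fst p / a^2 - fst q / a^2) / tan_det a b p q).

Fixpoint shoelace_aux (first : pt) (l : list pt) : R :=
  match l with
  | nil => 0
  | p :: nil => fst p * snd first - fst first * snd p
  | p :: ((q :: _) as l') => (fst p * snd q - fst q * snd p) + shoelace_aux first l'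
  end.

Definition signed_area (l : list pt) : R :=
  match l with
  | nil => 0
  | p :: _ => / 2 * shoelace_aux p l
  end.

(* Main.v *)
Require Import Defs.
From Stdlib Require Import Reals List Lra.
Import ListNotations.
Open Scope R_scope.

Lemma gen (a b x y X Y : R) : a <> 0 -> b <> 0 ->
  let p1 := (x, y) in let p2 := (-X, -Y) in let p3 := (-x, y) in let p4 := (X, -Y) in
  signed_area (p1 :: p2 :: p3 :: p4 :: nil) = 0 /\
  (tan_det a b p1 p2 <> 0 -> tan_det a b p2 p3 <> 0 ->
   tan_det a b p3 p4 <> 0 -> tan_det a b p4 p1 <> 0 ->
   signed_area (tan_meet a b p1 p2 :: tan_meet a b p2 p3 ::
                tan_meet a b p3 p4 :: tan_meet a b p4 p1 :: nil) = 0).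
Proof.
  intros ha hb; simpl. split.
  - unfold signed_area; simpl; ring.
  - assert (K : forall p q, tan_det a b p q <> 0 -> fst p * snd q - fst q * snd p <> 0).
    { intros p q hd h; apply hd; unfold tan_det.
      replace (fst p / a ^ 2 * (snd q / b ^ 2) - fst q / a ^ 2 * (snd p / b ^ 2))
        with ((fst p * snd q - fst q * snd p) / (a^2*b^2)) by (field; auto).
      rewrite h; unfold Rdiv; ring. }
    intros d1 d2 d3 d4.
    apply K in d1; apply K in d2; apply K in d3; apply K in d4; simpl in *.
    unfold tan_det, signed_area, tan_meet; simpl.
    field; repeat split; auto.
Qed.

Theorem mainTheorem2 (a b u : R) :
  0 < b -> b < a -> a / b > sqrt 2 -> Rabs u <= umax a b ->
  signed_area (P1 a b u :: P2 a b u :: P3 a b u :: P4 a b u :: nil) = 0 /\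
  (tan_det a b (P1 a b u) (P2 a b u) <> 0 ->
   tan_det a b (P2 a b u) (P3 a b u) <> 0 ->
   tan_det a b (P3 a b u) (P4 a b u) <> 0 ->
   tan_det a b (P4 a b u) (P1 a b u) <> 0 ->
   signed_area (tan_meet a b (P1 a b u) (P2 a b u) ::
                tan_meet a b (P2 a b u) (P3 a b u) ::
                tan_meet a b (P3 a b u) (P4 a b u) ::
                tan_meet a b (P4 a b u) (P1 a b u) :: nil) = 0).
Proof.
  intros hb hab _ _.
  assert (E2 : P2 a b u = (- ((a * sqrt (a^2*(a^2 - 2*b^2) - (cc a b)^4 * u^2)) / ((cc a b)^2 * sqrt (1 - u^2))),
   - (b^3 / ((cc a b)^2 * sqrt (1 - u^2))))).
  { unfold P2; f_equal; unfold Rdiv; ring. }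
  assert (E4 : P4 a b u = ((a * sqrt (a^2*(a^2 - 2*b^2) - (cc a b)^4 * u^2)) / ((cc a b)^2 * sqrt (1 - u^2)),
   - (b^3 / ((cc a b)^2 * sqrt (1 - u^2))))).
  { unfold P4; f_equal; unfold Rdiv; ring. }
  assert (E3 : P3 a b u = (- (a*u), b * sqrt (1 - u^2))) by reflexivity.
  rewrite E2, E4, E3. unfold P1.
  apply (gen a b (a*u) (b * sqrt (1 - u^2)) _ (b ^ 3 / (cc a b ^ 2 * sqrt (1 - u ^ 2)))); lra.
Qed.
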